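(* Let $H$ be an ASC-hypergraph on the carrier $\{1,\dots,d+1\}$ with $d\ge0$, and let $\{v\}$ be a vertex of the polytope $\mathcal G(H)$. Then there is a construction $K$ of $H$ such that $\{v\}=\bigcap\{\pi_X\mid X\in K\}$ and $v\notin\pi_Y$ for every $Y\in H\setminus K$.
   Context: A hypergraph is a finite set $H$ of nonempty subsets of some finite set; its carrier is $\bigcup H$. For a family $F$ and set $Y$, $F_Y=\{X\in F\mid X\subseteq Y\}$. A hypergraph partition of $H$ is a partition $\{H_1,\dots,H_n\}$ ($n\ge0$) of the set $H$ with $\{\bigcup H_1,\dots,\bigcup H_n\}$ a partition of $\bigcup H$; $H$ is connected if it has exactly one hypergraph partition; the finest hypergraph partition is the unique one whose blocks are connected. $H$ is atomic if $\{x\}\in H$ for all $x\in\bigcup H$; saturated if $X_1,X_2\in H$ with $X_1\cap X_2\neq\emptyset$ imply $X_1\cup X_2\in H$. An ASC-hypergraph is one that is atomic, saturated and connected. Constructions of an atomic $H$, by induction on $|\bigcup H|$: (0) $\emptyset$ is the only construction of $\emptyset$; (1) if $|\bigcup H|\ge1$, $H$ connected, $x\in\bigcup H$, $K$ a construction of $H_{\bigcup H\setminus\{x\}}$, then $K\cup\{\bigcup H\}$ is a construction of $H$; (2) if $H$ is not connected with finest hypergraph partition $\{H_1,\dots,H_n\}$, $n\ge2$, and $K_i$ is a construction of $H_i$, then $K_1\cup\dots\cup K_n$ is a construction of $H$. For $X\in H$ let $\pi_X=\{(x_1,\dots,x_{d+1})\in\mathbb R^{d+1}\mid\sum_{i\in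 X}x_i=3^{|X|}\}$ and $\pi_X^+=\{(x_1,\dots,x_{d+1})\in\mathbb R^{d+1}\mid\sum_{i\in X}x_i\ge3^{|X|}\}$. Define the convex polytope $\mathcal G(H)=\bigcap\{\pi_X^+\mid X\in H\setminus\{\bigcup H\}\}\cap\pi_{\bigcup H}$. *)

(* Defs.v *)
From HB Require Import structures.
From mathcomp Require Import all_boot all_order all_algebra.
Set Implicit Arguments. Unset Strict Implicit. Unset Printing Implicit Defensive.
Import Order.TTheory GRing.Theory Num.Theory.

Section Hypergraphs.
Variable T : finType.

(* A hypergraph on (a subset of) T: a finite set of nonempty subsets of T.
   Its carrier is [cover H] = \bigcup H. *)
Definition hypergraph (H : {set {set T}}) : Prop := set0 \notin H.

Definition restr (F : {set {set T}}) (Y : {set T}) : {set {set T}} :=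
  [set X in F | X \subset Y].

Definition hpartition (H : {set {set T}}) (P : {set {set {set T}}}) : Prop :=
  partition P H /\
  (forall B1 B2, B1 \in P -> B2 \in P -> B1 != B2 ->
     [disjoint cover B1 & cover B2]).

Definition connected (H : {set {set T}}) : Prop :=
  exists P, hpartition H P /\ forall P', hpartition H P' -> P' = P.

Definition finest_hpartition (H : {set {set T}}) (P : {set {set {set T}}}) : Prop :=
  hpartition H P /\ forall B, B \in P -> connected B.

Definition atomic (H : {set {set T}}) : Prop :=
  forall x, x \in cover H -> [set x] \in H.

Definition saturated (H : {set {set T}}) : Prop :=
  forall X1 X2, X1 \in H -> X2 \in H -> X1 :&: X2 != set0 -> X1 :|: X2 \in H.

Definition ASC (H : {set {set T}}) : Prop :=
  hypergraph H /\ atomic H /\ saturated H /\ connected H.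

Inductive construction : {set {set T}} -> {set {set T}} -> Prop :=
| constr_empty : construction set0 set0
| constr_conn (H K : {set {set T}}) (x : T) :
    cover H != set0 -> connected H -> x \in cover H ->
    construction (restr H (cover H :\ x)) K ->
    construction H (K :|: [set cover H])
| constr_split (H : {set {set T}}) (P : {set {set {set T}}})
    (Kf : {set {set T}} -> {set {set T}}) :
    ~ connected H -> finest_hpartition H P -> 2 <= #|P| ->
    (forall Hi, Hi \in P -> construction Hi (Kf Hi)) ->
    construction H (\bigcup_(Hi in P) Kf Hi).

End Hypergraphs.

Local Open Scope ring_scope.

(* points of R^(d+1) are row vectors; coordinate i of x is x ord0 i *)
Definition pi_ (R : realFieldType) (d : nat) (X : {set 'I_d.+1}) : pred 'rV[R]_d.+1 :=
  fun x => \sum_(i in X) x ord0 i == (3 ^ #|X|)%N%:R.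

Definition pi_plus (R : realFieldType) (d : nat) (X : {set 'I_d.+1}) : pred 'rV[R]_d.+1 :=
  fun x => (3 ^ #|X|)%N%:R <= \sum_(i in X) x ord0 i.

Definition polytopeG (R : realFieldType) (d : nat) (H : {set {set 'I_d.+1}})
  : pred 'rV[R]_d.+1 :=
  fun x => [forall X in H :\ cover H, @pi_plus R d X x] && @pi_ R d (cover H) x.

Definition is_vertex (R : realFieldType) (n : nat) (S : pred 'rV[R]_n) (v : 'rV[R]_n) : Prop :=
  S v /\ forall x y (t : R), S x -> S y -> 0 < t < 1 ->
    v = t *: x + (1 - t) *: y -> x = y.

(* Main.v *)
Require Import Defs.
From HB Require Import structures.
From mathcomp Require Import all_boot all_order all_algebra.
From Stdlib Require Import Lia.
Import Order.TTheory GRing.Theory Num.Theory.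
Set Implicit Arguments. Unset Strict Implicit. Unset Printing Implicit Defensive.

Lemma ar2 q p s : 3 <= q -> 3 <= p -> s <= p -> q + s < q * p.
Proof. move=> /ssrnat.leP h1 /ssrnat.leP h2 /ssrnat.leP h3; apply/ssrnat.leP; rewrite -?plusE -?multE; nia. Qed.

Lemma ar1 x y p : x <= p -> y <= p -> 0 < p -> x + y < 3 * p.
Proof. move=> /ssrnat.leP h1 /ssrnat.leP h2 /ssrnat.leP h3; apply/ssrnat.leP; rewrite -?plusE -?multE; nia. Qed.

Lemma pow3_ge3 a : 0 < a -> 3 <= 3 ^ a.
Proof. by move=> a0; rewrite -{1}(expn1 3) leq_exp2l. Qed.

Lemma pow_two a b u : a < u -> b < u -> 3 ^ a + 3 ^ b < 3 ^ u.
Proof.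
move=> au bu; have u0 : 0 < u := leq_ltn_trans (leq0n a) au.
have -> : 3 ^ u = 3 * 3 ^ u.-1 by rewrite -expnS prednK.
apply: ar1; rewrite ?expn_gt0 // leq_exp2l // -ltnS prednK //.
Qed.

Lemma pow3_le (I : Type) (r : seq I) (P : pred I) (a : I -> nat) :
  (forall i, P i -> 0 < a i) ->
  \sum_(i <- r | P i) 3 ^ a i <= 3 ^ (\sum_(i <- r | P i) a i) /\
  (\sum_(i <- r | P i) a i = 0 -> \sum_(i <- r | P i) 3 ^ a i = 0).
Proof.
move=> pos; elim: r => [|x r [h1 h2]]; first by rewrite !big_nil.
rewrite !big_cons; case Px: (P x) => //.
split; last by have := pos x Px; case: (a x).
rewrite expnD.
case: (\sum_(i <- r | P i) a i) h1 h2 => [_ /(_ erefl) -> | S h1 _].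
  by rewrite addn0 expn0 muln1.
by apply: ltnW; apply: ar2 h1; apply: pow3_ge3 => //; apply: pos.
Qed.

Lemma pow3_strict (I : finType) (P : pred I) (a : I -> nat) x y :
  P x -> P y -> x != y -> (forall i, P i -> 0 < a i) ->
  \sum_(i | P i) 3 ^ a i < 3 ^ (\sum_(i | P i) a i).
Proof.
move=> Px Py xy pos.
rewrite (bigD1 x Px) /= (bigD1 x Px) /= expnD.
have [h1 _] := @pow3_le I (index_enum I) (fun i => P i && (i != x)) a
  (fun i h => pos i (proj1 (andP h))).
apply: ar2 => //; first exact: pow3_ge3 (pos x Px).
apply: pow3_ge3.
have Py' : P y && (y != x) by rewrite Py eq_sym xy.
rewrite (bigD1 y Py') /=.
by apply: leq_trans (pos y Py) (leq_addr _ _).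
Qed.

Section Gen.
Variable T : finType.
Implicit Types (G : {set {set T}}) (X Y M C : {set T}).

Definition maxel G := [set M | maxset [pred X | X \in G] M].

Lemma maxelP G M : reflect (M \in G /\ forall X, X \in G -> M \subset X -> X = M) (M \in maxel G).
Proof. rewrite inE; exact: maxsetP. Qed.

Lemma maxel_sub G : maxel G \subset G.
Proof. by apply/subsetP => M /maxelP []. Qed.

Lemma maxel_exists G X : X \in G -> exists2 M, M \in maxel G & X \subset M.
Proof.
move=> XG; have [M HM XM] := @maxset_exists _ [pred X | X \in G] X XG.
by exists M => //; rewrite inE.
Qed.

Lemma restr_sub G C X : (X \in restr G C) = (X \in G) && (X \subset C).
Proof. by rewrite inE. Qed.

Lemma cover_restr G M : M \in G -> cover (restr G M) = M.
Proof.
move=> MG; apply/eqP; rewrite eqEsubset; apply/andP; split.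
  by apply/bigcupsP => X; rewrite inE => /andP[].
by apply: bigcup_sup; rewrite inE MG subxx.
Qed.

Lemma sub_cover G X : X \in G -> X \subset cover G.
Proof. exact: bigcup_sup. Qed.

Lemma maxel_disj G M1 M2 : saturated G -> M1 \in maxel G -> M2 \in maxel G ->
  M1 != M2 -> [disjoint M1 & M2].
Proof.
move=> sat /maxelP[M1G m1] /maxelP[M2G m2] ne.
rewrite -setI_eq0; apply: contraNT ne => ne0.
have U := sat _ _ M1G M2G ne0.
have e1 := m1 _ U (subsetUl _ _); have e2 := m2 _ U (subsetUr _ _).
by rewrite -e1 e2.
Qed.

Lemma conn_of_cover G : set0 \notin G -> cover G \in G -> connected G.
Proof.
move=> G0 cG.
have Gne : G != set0 by apply/set0Pn; exists (cover G).
have hp : hpartition G [set G].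
  split; first by rewrite /partition cover1 trivIset1 eqxx inE eq_sym Gne.
  by move=> B1 B2 /set1P-> /set1P->; rewrite eqxx.
exists [set G]; split => // P' [/and3P[/eqP cP' tP' nP0] dP'].
have: cover G \in cover P' by rewrite cP'.
case/bigcupP => B BP' cB.
have PB : P' = [set B].
  apply/setP => B'; rewrite inE; apply/idP/eqP => [B'P|->//].
  case: (eqVneq B' B) => // ne; exfalso.
  have := dP' _ _ B'P BP' ne.
  have B'ne : B' != set0 by apply: contraNneq nP0 => <-.
  case/set0Pn: B'ne => Y YB'.
  have YG : Y \in G by rewrite -cP'; apply/bigcupP; exists B'.
  have /set0Pn[y yY] : Y != set0 by apply: contraNneq G0 => <-.
  have ycB' : y \in cover B' by apply/bigcupP; exists Y.
  have ycB : y \in cover B.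
    have : y \in cover G by apply/bigcupP; exists Y.
    by move=> ycG; apply: (subsetP (sub_cover cB)) ycG.
  by move/disjointFr => /(_ _ ycB'); rewrite ycB.
by rewrite PB -cP' PB cover1.
Qed.

End Gen.

Section Gen2.
Variable T : finType.
Implicit Types (G : {set {set T}}) (X Y M C : {set T}).

Definition comps G := [set restr G M | M in maxel G].

Lemma comps_hpart G : set0 \notin G -> saturated G -> hpartition G (comps G).
Proof.
move=> G0 sat; split.
  apply/and3P; split.
  - apply/eqP/setP => X; apply/bigcupP/idP => [[B /imsetP[M _ ->]]|XG].
      by rewrite inE => /andP[].
    have [M MG XM] := maxel_exists XG.
    by exists (restr G M); [apply: imset_f | rewrite inE XG].
  - apply/trivIsetP => B1 B2 /imsetP[M1 M1G ->] /imsetP[M2 M2G ->] ne.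
    have neM : M1 != M2 by apply: contraNneq ne => ->.
    have dM := maxel_disj sat M1G M2G neM.
    rewrite -setI_eq0; apply/eqP/setP => X; rewrite !inE.
    apply/negbTE/negP => /andP[/andP[XG X1] /andP[_ X2]].
    have : X \subset M1 :&: M2 by rewrite subsetI X1 X2.
    rewrite (disjoint_setI0 dM) subset0 => /eqP X0.
    by move: G0; rewrite -X0 XG.
  - apply/imsetP => [[M MG E]].
    have MG' : M \in G by move: MG; apply/subsetP/maxel_sub.
    have : M \in restr G M by rewrite inE MG' subxx.
    by rewrite -E inE.
move=> B1 B2 /imsetP[M1 M1G ->] /imsetP[M2 M2G ->] ne.
have neM : M1 != M2 by apply: contraNneq ne => ->.
have M1G' : M1 \in G by move: M1G; apply/subsetP/maxel_sub.
have M2G' : M2 \in G by move: M2G; apply/subsetP/maxel_sub.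
rewrite !cover_restr //. exact: (maxel_disj sat M1G M2G neM).
Qed.

Lemma comps_split G : set0 \notin G -> saturated G -> cover G \notin G -> G != set0 ->
  [/\ ~ connected G, finest_hpartition G (comps G) & 2 <= #|comps G| ].
Proof.
move=> G0 sat cG Gne.
have hp := comps_hpart G0 sat.
have two : 2 <= #|comps G|.
  case/set0Pn: Gne => X XG.
  have [M1 M1G _] := maxel_exists XG.
  have M1G' : M1 \in G by move: M1G; apply/subsetP/maxel_sub.
  have : M1 \proper cover G.
    rewrite properEneq sub_cover // andbT.
    by apply: contraNneq cG => <-.
  case/properP => _ [y ycG yM1].
  case/bigcupP: ycG => Y YG yY.
  have [M2 M2G YM2] := maxel_exists YG.
  have M2G' : M2 \in G by move: M2G; apply/subsetP/maxel_sub.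
  apply/card_gt1P; exists (restr G M1), (restr G M2); split; try exact: imset_f.
  apply/eqP => E.
  have : cover (restr G M1) = cover (restr G M2) by rewrite E.
  rewrite !cover_restr // => EM.
  by move: yM1; rewrite EM (subsetP YM2).
split => //.
- move=> [P [_ uP]].
  have e1 := uP _ hp.
  have hp1 : hpartition G [set G].
    split; first by rewrite /partition cover1 trivIset1 eqxx inE eq_sym Gne.
    by move=> B1 B2 /set1P-> /set1P->; rewrite eqxx.
  have e2 := uP _ hp1.
  by move: two; rewrite e1 -e2 cards1.
- split => // B /imsetP[M MG ->].
  have MG' : M \in G by move: MG; apply/subsetP/maxel_sub.
  apply: conn_of_cover.
    by rewrite inE negb_and G0.
  by rewrite cover_restr // inE MG' subxx.
Qed.

End Gen2.

Local Open Scope ring_scope.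

Section Main.
Variables (R : realFieldType) (n : nat) (H : {set {set 'I_n}}) (v : 'I_n -> R).
Hypotheses (H0 : set0 \notin H) (Hat : forall i, [set i] \in H) (Hsat : saturated H)
  (Hge : forall X, X \in H -> (3 ^ #|X|)%N%:R <= \sum_(i in X) v i).
Implicit Types (X Y M C U : {set 'I_n}).

Definition tight X := \sum_(i in X) v i == (3 ^ #|X|)%N%:R.
Definition TT := [set X in H | tight X].

Lemma TTP X : reflect (X \in H /\ \sum_(i in X) v i = (3 ^ #|X|)%N%:R) (X \in TT).
Proof. by rewrite inE; apply: (iffP andP) => -[-> /eqP]. Qed.

Lemma vpos i : 0 < v i.
Proof.
have := Hge (Hat i); rewrite big_set1 cards1 expn1 => h.
by apply: lt_le_trans h; rewrite ltr0n.
Qed.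

Lemma sumv_sub X Y : X \subset Y -> \sum_(i in X) v i <= \sum_(i in Y) v i.
Proof.
move=> XY; rewrite (big_setID (A:=Y) X) /= (setIidPr XY) lerDl.
by apply: sumr_ge0 => i _; apply: ltW (vpos i).
Qed.

Lemma laminar X Y : X \in TT -> Y \in TT -> X :&: Y != set0 ->
  X \subset Y \/ Y \subset X.
Proof.
move=> /TTP[XH eX] /TTP[YH eY] ne.
case XY: (X \subset Y); first by left.
case YX: (Y \subset X); first by right.
exfalso.
have UH := Hsat XH YH ne.
have pX : X \proper X :|: Y by rewrite properEneq subsetUl andbT;
  apply: contraFneq YX => {1}->; exact: subsetUr.
have pY : Y \proper X :|: Y by rewrite properEneq subsetUr andbT;
  apply: contraFneq XY => {1}->; exact: subsetUl.
have := Hge UH.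
have le : \sum_(i in X :|: Y) v i <= \sum_(i in X) v i + \sum_(i in Y) v i.
  rewrite (big_setID (A:=X :|: Y) X) /=; apply: lerD; apply: sumv_sub.
    exact: subsetIr.
  by apply/subsetP => i; rewrite !inE => /andP[/negbTE -> /=].
have lt := pow_two (proper_card pX) (proper_card pY).
move=> h; have := le_trans h le; rewrite eX eY -natrD ler_nat.
by rewrite leqNgt lt.
Qed.

Definition ch C := maxel [set X in TT | X \proper C].

Lemma chP C N : N \in ch C -> N \in TT /\ N \proper C.
Proof. by move/maxelP => [] /[!inE] /andP[]. Qed.

Lemma ch_disj C N1 N2 : N1 \in ch C -> N2 \in ch C -> N1 != N2 -> [disjoint N1 & N2].
Proof.
move=> h1 h2 ne; rewrite -setI_eq0; apply: contraNT ne => ne0.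
have [T1 _] := chP h1; have [T2 _] := chP h2.
move/maxelP: h1 => [F1 m1]; move/maxelP: h2 => [F2 m2].
case: (laminar T1 T2 ne0) => s.
  by rewrite (m1 _ F2 s).
by rewrite (m2 _ F1 s).
Qed.

Lemma ch_triv C : trivIset (ch C).
Proof. by apply/trivIsetP => N1 N2; apply: ch_disj. Qed.

Lemma ch_cov C X : X \in TT -> X \proper C -> X \subset cover (ch C).
Proof.
move=> XT XC; have XF : X \in [set X in TT | X \proper C] by rewrite inE XT XC.
have [M MF XM] := maxel_exists XF.
by apply: subset_trans XM (sub_cover MF).
Qed.

Lemma ch_sub C : cover (ch C) \subset C.
Proof. by apply/bigcupsP => N /chP[_ /properP[]]. Qed.

Lemma ch_cov_ne C : C \in H -> C != set0 -> cover (ch C) != C.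
Proof.
move=> CH Cne; apply/eqP => E.
have tr := ch_triv C.
have esum : \sum_(i in cover (ch C)) v i = (\sum_(N in ch C) 3 ^ #|N|)%N%:R.
  rewrite big_trivIset // natr_sum; apply: eq_bigr => N /chP[/TTP[_ ->] _] //.
have ecard : #|cover (ch C)| = (\sum_(N in ch C) #|N|)%N by rewrite (eqP tr).
rewrite E in esum ecard.
case: (ltnP 1 #|ch C|) => [/card_gt1P [N1 [N2 [h1 h2 ne]]] | le1].
  have := Hge CH; rewrite esum ecard ler_nat leqNgt.
  rewrite (pow3_strict (P := fun N => N \in ch C) h1 h2 ne) //.
  move=> N /chP[/TTP[NH _] _]; rewrite card_gt0; apply: contraNneq H0 => <-.
  exact: NH.
move: le1; rewrite leq_eqVlt ltnS leqn0 cards_eq0 => /orP[/cards1P[N eN]| /eqP e0].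
  move: E; rewrite eN cover1 => eNC.
  have : N \in ch C by rewrite eN set11.
  by case/chP => _; rewrite eNC properxx.
by move: E; rewrite e0 /cover big_set0 => eC; move: Cne; rewrite -eC eqxx.
Qed.


Definition span_on C := forall f : 'I_n -> R, (forall i, i \notin C -> f i = 0) ->
  (forall X, X \in TT -> X \subset C -> \sum_(i in X) f i = 0) -> forall i, f i = 0.

Lemma sum_delta (A : {set 'I_n}) x :
  \sum_(i in A) ((i == x)%:R : R) = (x \in A)%:R.
Proof.
case xA: (x \in A).
  rewrite (bigD1 x xA) /= eqxx big1 ?addr0 // => i /andP[_ /negbTE ->] //.
by rewrite big1 // => i iA; case: eqP => // e; move: xA; rewrite -e iA.
Qed.

Lemma cover_restrH C : cover (restr H C) = C.
Proof.
apply/eqP; rewrite eqEsubset; apply/andP; split.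
  by apply/bigcupsP => X; rewrite inE => /andP[].
apply/subsetP => i iC; apply/bigcupP; exists [set i]; last exact: set11.
by rewrite inE Hat sub1set.
Qed.

Lemma restr_restr (G : {set {set 'I_n}}) C (D : {set 'I_n}) : D \subset C -> restr (restr G C) D = restr G D.
Proof.
move=> DC; apply/setP => X; rewrite !inE -andbA; case XD: (X \subset D); last by rewrite !andbF.
by rewrite (subset_trans XD DC).
Qed.

Lemma restr_sat C : saturated (restr H C).
Proof.
move=> X1 X2; rewrite !inE => /andP[h1 s1] /andP[h2 s2] ne.
by rewrite Hsat // subUset s1 s2.
Qed.

Lemma restr_0 C : set0 \notin restr H C.
Proof. by rewrite inE negb_and H0. Qed.

Lemma comb k C : (#|C| < k)%N -> span_on C -> construction (restr H C) (restr TT C).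
Proof.
elim: k C => [//|k IH] C Ck sp.
case: (eqVneq C set0) => [->|Cne].
  have e1 : forall G : {set {set 'I_n}}, G \subset H -> restr G set0 = set0.
    move=> G GH; apply/setP => X; rewrite !inE subset0.
    case: eqP => [->|]; rewrite ?andbF ?andbT //.
    by apply/negbTE; apply: contra H0 => h; apply: (subsetP GH).
  rewrite !e1 //; first exact: constr_empty.
  by apply/subsetP => X /TTP[].
case CH: (C \in H).
  set U := cover (ch C).
  have UC : U \subset C := ch_sub C.
  have UneC : U != C := ch_cov_ne CH Cne.
  have pUC : U \proper C by rewrite properEneq UneC UC.
  case/properP: pUC => _ [x xC xU].
  have XU : forall X, X \in TT -> X \subset C -> X != C -> X \subset U.
    by move=> X XT XC XneC; apply: ch_cov => //; rewrite properEneq XneC XC.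
  have CT : C \in TT.
    apply: contraT => nCT.
    suff h : forall i, ((i == x)%:R : R) = 0 by have := h x; rewrite eqxx => /eqP; rewrite oner_eq0.
    apply: sp; first by move=> i iC; case: eqP => // e; move: iC; rewrite e xC.
    move=> X XT XC; rewrite sum_delta.
    have XneC : X != C by apply: contraNneq nCT => <-.
    by case: (boolP (x \in X)) => // xX; move: xU; rewrite (subsetP (XU X XT XC XneC)).
  have uniq : forall y, y \in C -> y \notin U -> y = x.
    move=> y yC yU; apply/eqP; apply: contraT => ne.
    suff h : forall i, ((i == x)%:R - (i == y)%:R : R) = 0.
      by have := h x; rewrite eqxx eq_sym (negbTE ne) subr0 => /eqP; rewrite oner_eq0.
    apply: sp.
      move=> i iC; case: eqP => [e|_]; first by move: iC; rewrite e xC.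
      by case: eqP => [e|_]; rewrite ?subr0 //; move: iC; rewrite e yC.
    move=> X XT XC; rewrite sumrB !sum_delta.
    case: (eqVneq X C) => [->|XneC]; first by rewrite xC yC subrr.
    have XU' := XU X XT XC XneC.
    case: (boolP (x \in X)) => xX; first by move: xU; rewrite (subsetP XU' x xX).
    case: (boolP (y \in X)) => yX; first by move: yU; rewrite (subsetP XU' y yX).
    by rewrite subrr.
  set C' := C :\ x.
  have C'C : C' \subset C by apply: subsetDl.
  have sp' : span_on C'.
    move=> f f0 fX.
    pose c := \sum_(i in C) f i.
    have fx : f x = 0 by apply: f0; rewrite !inE eqxx.
    have g0 : forall i, f i - c * (i == x)%:R = 0.
      apply: sp => [j jC|X XT XC].
        rewrite f0; last by rewrite !inE negb_and jC orbT.
        case: eqP => [e|_]; first by move: jC; rewrite e xC.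
        by rewrite mulr0 subr0.
      rewrite sumrB -mulr_sumr sum_delta.
      case: (eqVneq X C) => [->|XneC]; first by rewrite xC mulr1 subrr.
      have XU' := XU X XT XC XneC.
      have xX : x \notin X by apply: contra xU; apply: (subsetP XU').
      rewrite (negbTE xX) mulr0 subr0 fX //.
      apply/subsetP => j jX; rewrite !inE (subsetP XC j jX) andbT.
      by apply: contraNneq xX => <-.
    have c0 : c = 0.
      by have := g0 x; rewrite fx eqxx mulr1 sub0r => /eqP; rewrite oppr_eq0 => /eqP.
    by move=> i; have := g0 i; rewrite c0 mul0r subr0.
  have IH' : construction (restr H C') (restr TT C').
    apply: IH sp'; have e : #|C| = (#|C'|).+1 by rewrite (cardsD1 x C) xC.
    by rewrite e ltnS in Ck.
  have eT : restr TT C = restr TT C' :|: [set C].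
    apply/setP => X; rewrite in_setU in_set1 !restr_sub.
    case: (eqVneq X C) => [->|XneC]; first by rewrite CT subxx orbT.
    rewrite orbF; case XT: (X \in TT) => //=.
    apply/idP/idP => [XC|].
      have XU' := XU X XT XC XneC.
      apply/subsetP => j jX; rewrite !inE (subsetP XC j jX) andbT.
      by apply: contraNneq xU => <-; apply: (subsetP XU').
    by move=> h; apply: subset_trans h C'C.
  have ecov := cover_restrH C.
  have conn : connected (restr H C).
    by apply: conn_of_cover; rewrite ?restr_0 // ecov inE CH subxx.
  have h := @constr_conn _ (restr H C) (restr TT C') x.
  rewrite ecov -eT in h; apply: h => //.
  by rewrite restr_restr.
set G := restr H C.
have ecov : cover G = C := cover_restrH C.
have Gne : G != set0.
  case/set0Pn: Cne => x xC; apply/set0Pn; exists [set x].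
  by rewrite restr_sub Hat sub1set.
have cG : cover G \notin G by rewrite ecov restr_sub CH.
have [nc fin two] := comps_split (@restr_0 C) (@restr_sat C) cG Gne.
have MGP : forall M, M \in maxel G -> [/\ M \in H, M \subset C & M \in G].
  move=> M MG; have MG' : M \in G by move: MG; apply/subsetP/maxel_sub.
  by move: (MG'); rewrite {1}restr_sub => /andP[a b]; split.
have eU : restr TT C = \bigcup_(Hi in comps G) restr TT (cover Hi).
  apply/setP => X; apply/idP/bigcupP => [|[Hi /imsetP[M MG ->]]].
    rewrite restr_sub => /andP[XT XC].
    have XG : X \in G by rewrite restr_sub XC andbT; case/TTP: XT.
    have [M MG XM] := maxel_exists XG.
    have [_ _ MG'] := MGP M MG.
    by exists (restr G M); [apply: imset_f | rewrite cover_restr // restr_sub XT XM].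
  have [_ MC MG'] := MGP M MG.
  rewrite cover_restr // !restr_sub => /andP[-> XM] /=.
  exact: subset_trans XM MC.
rewrite eU; apply: constr_split nc fin two _.
move=> Hi /imsetP[M MG ->].
have [MH MC MG'] := MGP M MG.
rewrite cover_restr // restr_restr //.
apply: IH.
  have pMC : M \proper C by rewrite properEneq MC andbT; apply: contraFneq CH => <-.
  by have := proper_card pMC; rewrite -ltnS => h; apply: leq_trans h Ck.
move=> f f0 fX; apply: sp => [i iC|X XT XC]; first by apply: f0; apply: contra iC; apply: (subsetP MC).
have XG : X \in G by rewrite restr_sub XC andbT; case/TTP: XT.
have [M' MG2 XM'] := maxel_exists XG.
case: (eqVneq M' M) => [eM|ne]; first by apply: fX => //; rewrite -eM.
have dM := maxel_disj (@restr_sat C) MG2 MG ne.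
apply: big1 => i iX; apply: f0.
by rewrite (disjointFr dM) // (subsetP XM').
Qed.

End Main.

Lemma vert_span (R : realFieldType) (d : nat) (H : {set {set 'I_d.+1}}) (v : 'rV[R]_d.+1) :
  cover H = [set: 'I_d.+1] -> [set: 'I_d.+1] \in H ->
  (forall X, X \in H -> (3 ^ #|X|)%N%:R <= \sum_(i in X) v ord0 i) ->
  is_vertex (@polytopeG R d H) v ->
  span_on H (fun i => v ord0 i) [set: 'I_d.+1].
Proof.
move=> cov TH Hge [Gv vext] f _ fX.
pose vv : 'I_d.+1 -> R := fun i => v ord0 i.
pose w : 'rV[R]_d.+1 := \row_i f i.
pose s (X : {set 'I_d.+1}) := \sum_(i in X) vv i - (3 ^ #|X|)%N%:R.
pose S := \sum_(X in H | ~~ tight vv X) `|\sum_(i in X) f i| / s X.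
have S0 : 0 <= S.
  apply: sumr_ge0 => X /andP[XH nt]; apply: divr_ge0 => //.
  by rewrite subr_ge0 Hge.
have S1 : 0 < 1 + S by apply: lt_le_trans (ltr01) _; rewrite lerDl.
pose eps := (1 + S)^-1.
have eps0 : 0 < eps by rewrite invr_gt0.
have sumE : forall (c : R) (X : {set 'I_d.+1}), \sum_(i in X) (v + c *: w) ord0 i =
    \sum_(i in X) v ord0 i + c * \sum_(i in X) f i.
  move=> c X; rewrite mulr_sumr -big_split /=; apply: eq_bigr => i _.
  by rewrite !mxE.
have inG : forall c, `|c| <= eps -> @polytopeG R d H (v + c *: w).
  move=> c ce; move/andP: Gv => [/forallP GX GC].
  apply/andP; split.
    apply/forallP => X; apply/implyP => XH'.
    have XH : X \in H by move: XH'; rewrite inE => /andP[].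
    rewrite /pi_plus sumE.
    case tX: (tight vv X).
      have -> : \sum_(i in X) f i = 0 by apply: fX; rewrite ?inE ?XH ?tX ?subsetT.
      by rewrite mulr0 addr0 Hge.
    have sX : 0 < s X.
      rewrite subr_gt0 lt_neqAle Hge // andbT.
      by move: tX; rewrite /tight eq_sym => ->.
    set F := \sum_(i in X) f i.
    have aS : `|F| / s X <= S.
      rewrite /S (bigD1 X) /=; last by rewrite XH tX.
      rewrite lerDl; apply: sumr_ge0 => Y /andP[/andP[YH nt] _]; apply: divr_ge0 => //.
      by rewrite subr_ge0 Hge.
    have aeps : `|F| * eps <= s X.
      rewrite ler_pdivrMr // ; move: aS; rewrite ler_pdivrMr // => aS.
      apply: le_trans aS _; rewrite mulrC ler_wpM2l ?ltW //.
      by rewrite ltrDr ltr01.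
    have : - (c * F) <= s X.
      apply: le_trans (aeps); apply: le_trans (ler_norm _) _.
      rewrite normrN normrM mulrC ler_wpM2l //.
    rewrite /s lerBrDr => h.
    by rewrite -lerBlDr addrC.
  rewrite /pi_ sumE.
  have -> : \sum_(i in cover H) f i = 0.
    apply: fX; last by rewrite subsetT.
    by rewrite inE {1}cov TH; exact: GC.
  by rewrite mulr0 addr0.
have half : 1 - 2^-1 = 2^-1 :> R.
  by apply/eqP; rewrite subr_eq {1}(splitr 1) mul1r.
have e1 : `|eps| <= eps by rewrite ger0_norm // ltW.
have e2 : `|- eps| <= eps by rewrite normrN ger0_norm // ltW.
have t0 : (0 : R) < 2^-1 by rewrite invr_gt0 ltr0n.
have t1 : (2^-1 : R) < 1 by rewrite invf_lt1 ?ltr0n // ltr1n.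
have t01 : ((0 : R) < 2^-1) && ((2^-1 : R) < 1) by rewrite t0 t1.
have hv : v = 2^-1 *: (v + eps *: w) + (1 - 2^-1) *: (v + - eps *: w).
  rewrite half -scalerDr addrACA scaleNr subrr addr0.
  by apply/rowP => j; rewrite !mxE mulrDr [2^-1 * _]mulrC -splitr.
have hxy := vext _ _ _ (inG eps e1) (inG (- eps) e2) t01 hv.
move=> i; have := congr1 (fun M : 'rV[R]_d.+1 => M ord0 i) hxy; rewrite !mxE.
move/addrI; rewrite mulNr => /eqP.
rewrite -subr_eq0 opprK -mulr2n mulrn_eq0 /= mulf_eq0 (gt_eqF eps0) /=.
by move/eqP.
Qed.

Unset Implicit Arguments.

Theorem proposition9p3 (R : realFieldType) (d : nat) (H : {set {set 'I_d.+1}})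
  (v : 'rV[R]_d.+1) :
  ASC H -> cover H = [set: 'I_d.+1] ->
  is_vertex (@polytopeG R d H) v ->
  exists K : {set {set 'I_d.+1}},
    construction H K /\
    (forall x : 'rV[R]_d.+1, (forall X, X \in K -> @pi_ R d X x) <-> x = v) /\
    (forall Y, Y \in H :\: K -> ~~ @pi_ R d Y v).
Proof.
move=> [hyp [atom [sat conn]]] cov [Gv vext].
have Hat : forall i, [set i] \in H by move=> i; apply: atom; rewrite cov inE.
have Hne : H != set0 by apply/set0Pn; exists [set ord0]; exact: Hat.
have TH : [set: 'I_d.+1] \in H.
  rewrite -cov; apply: contraT => nc.
  by have [nc' _ _] := comps_split hyp sat nc Hne.
have Hge : forall X, X \in H -> (3 ^ #|X|)%N%:R <= \sum_(i in X) v ord0 i.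
  move=> X XH; move/andP: (Gv) => [/forallP GX GC].
  case: (eqVneq X (cover H)) => [->|ne]; first by move/eqP: GC => ->.
  by move/implyP: (GX X); rewrite !inE ne XH; apply.
have sp := vert_span cov TH Hge (conj Gv vext).
have c := comb hyp Hat sat Hge (ltnSn #|[set: 'I_d.+1]|) sp.
have eR : forall G : {set {set 'I_d.+1}}, restr G [set: 'I_d.+1] = G.
  by move=> G; apply/setP => X; rewrite inE subsetT andbT.
rewrite !eR in c.
exists (TT H (fun i => v ord0 i)); split => //; split.
  move=> x; split => [hx|->]; last by move=> X /TTP[_ e]; apply/eqP.
  apply/rowP => j; apply/eqP; rewrite -subr_eq0; apply/eqP.
  apply: (sp (fun i => x ord0 i - v ord0 i) _ _ j); first by move=> i; rewrite inE.
  move=> X XT _.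
  rewrite sumrB; case/TTP: (XT) => _ ->.
  by rewrite (eqP (hx X XT)) subrr.
move=> Y; rewrite inE => /andP[nT YH]; apply: contra nT => p.
by rewrite inE YH.
Qed.
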